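(* Let $\mathcal{H}$, $\mathcal{F}$, $v_f$ and the greedy scheme be as in the context, with constant $c\ge 1$ and non-negative convex penalty $w$, and let $f^\star$ be any element of the Hilbert space. Then for every $m\ge 1$, $$\|f^\star-f_m\|^2+w(v_m)\le \inf_{f\in\mathcal{F}}\Big\{\|f^\star-f\|^2+w(cv_f)+\frac{4b_f}{m}\Big\},\qquad b_f=c^2v_f^2+2v_f\|f^\star\|(c+1)-\|f\|^2 .$$ Moreover, $$\|f^\star-f_m\|^2+w(v_m)\le \inf_{f\in\mathcal{F}}\inf_{\delta>0}\Big\{(1+\delta)\|f^\star-f\|^2+w(cv_f)+\frac{4(1+\delta)\delta^{-1}(c+1)^2v_f^2}{m}\Big\},$$ and consequently $$\|f^\star-f_m\|^2+w(v_m)\le \inf_{f\in\mathcal{F}}\Big\{\Big(\|f^\star-f\|+\frac{2(c+1)v_f}{\sqrt m}\Big)^2+w(cv_f)\Big\}.$$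
   Context: Let $(\mathcal{V},\langle\cdot,\cdot\rangle)$ be a real Hilbert space with norm $\|\cdot\|$ (in the paper, $L^2(P)$ for a probability measure $P$ on $[-1,1]^d$). Let $\mathcal{H}\subset\mathcal{V}$ be a dictionary with $\|h\|\le 1$ for all $h\in\mathcal{H}$, $\mathcal{H}=-\mathcal{H}$ and $0\in\mathcal{H}$. Let $\mathcal{F}$ be the set of finite combinations $f=\sum_{h\in\mathcal{H}}\beta_h h$ with $\beta_h\ge 0$, and for $f\in\mathcal{F}$ let $v_f=\inf\{\sum_h\beta_h : f=\sum_h\beta_h h,\ \beta_h\ge0\}$. Let $w:\mathbb{R}\to[0,\infty)$ be convex and $c\ge1$. Greedy scheme: $f_0=0$, $v_0=0$. For $m=1,2,\dots$: choose $h_m\in\mathcal{H}$ with $\langle h_m,f^\star-f_{m-1}\rangle\ge \frac1c\sup_{h\in\mathcal{H}}\langle h,f^\star-f_{m-1}\rangle$; then choose $\alpha_m\in[0,1]$ and $\beta_{m,m}\ge0$ attaining $\inf_{\alpha\in[0,1],\beta\ge0}\big[\|f^\star-(1-\alpha)f_{m-1}-\beta h_m\|^2+w((1-\alpha)v_{m-1}+\beta)\big]$, and set $f_m=(1-\alpha_m)f_{m-1}+\beta_{m,m}h_m$, $v_m=(1-\alpha_m)v_{m-1}+\beta_{m,m}$. *)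

(* Defs.v *)
From Stdlib Require Import Reals Lra List.
Open Scope R_scope.

Record Hilbert := {
  hcar :> Type;
  hadd : hcar -> hcar -> hcar;
  hopp : hcar -> hcar;
  hzero : hcar;
  hscal : R -> hcar -> hcar;
  hinner : hcar -> hcar -> R;
  hadd_assoc : forall x y z, hadd x (hadd y z) = hadd (hadd x y) z;
  hadd_comm : forall x y, hadd x y = hadd y x;
  hadd_zero : forall x, hadd x hzero = x;
  hadd_opp : forall x, hadd x (hopp x) = hzero;
  hscal_assoc : forall a b x, hscal a (hscal b x) = hscal (a * b) x;
  hscal_one : forall x, hscal 1 x = x;
  hscal_distr_v : forall a x y, hscal a (hadd x y) = hadd (hscal a x) (hscal a y);
  hscal_distr_s : forall a b x, hscal (a + b) x = hadd (hscal a x) (hscal b x);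
  hinner_sym : forall x y, hinner x y = hinner y x;
  hinner_add_l : forall x y z, hinner (hadd x y) z = hinner x z + hinner y z;
  hinner_scal_l : forall a x y, hinner (hscal a x) y = a * hinner x y;
  hinner_pos : forall x, 0 <= hinner x x;
  hinner_def : forall x, hinner x x = 0 -> x = hzero;
  hcomplete : forall u : nat -> hcar,
    (forall eps, 0 < eps -> exists N, forall n m, (N <= n)%nat -> (N <= m)%nat ->
        sqrt (hinner (hadd (u n) (hopp (u m))) (hadd (u n) (hopp (u m)))) < eps) ->
    exists l, forall eps, 0 < eps -> exists N, forall n, (N <= n)%nat ->
        sqrt (hinner (hadd (u n) (hopp l)) (hadd (u n) (hopp l))) < eps
}.

Arguments hadd {h}. Arguments hopp {h}. Arguments hzero {h}.
Arguments hscal {h}. Arguments hinner {h}.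

Definition hsub {V : Hilbert} (x y : V) : V := hadd x (hopp y).
Definition hnorm {V : Hilbert} (x : V) : R := sqrt (hinner x x).

Definition comb {V : Hilbert} (l : list (R * V)) : V :=
  fold_right (fun p acc => hadd (hscal (fst p) (snd p)) acc) hzero l.
Definition coef_sum {V : Hilbert} (l : list (R * V)) : R :=
  fold_right (fun p acc => fst p + acc) 0 l.

Definition is_rep {V : Hilbert} (Hd : V -> Prop) (f : V) (l : list (R * V)) : Prop :=
  Forall (fun p => 0 <= fst p /\ Hd (snd p)) l /\ f = comb l.

Definition inF {V : Hilbert} (Hd : V -> Prop) (f : V) : Prop :=
  exists l, is_rep Hd f l.

Definition is_inf (E : R -> Prop) (v : R) : Prop :=
  (forall x, E x -> v <= x) /\ (forall y, (forall x, E x -> y <= x) -> y <= v).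

Definition is_vnorm {V : Hilbert} (Hd : V -> Prop) (f : V) (v : R) : Prop :=
  is_inf (fun s => exists l, is_rep Hd f l /\ s = coef_sum l) v.

Definition convex_fun (w : R -> R) : Prop :=
  forall x y t, 0 <= t <= 1 -> w (t * x + (1 - t) * y) <= t * w x + (1 - t) * w y.

Definition dictionary {V : Hilbert} (Hd : V -> Prop) : Prop :=
  (forall h, Hd h -> hnorm h <= 1) /\ (forall h, Hd h -> Hd (hopp h)) /\ Hd hzero.

Definition greedy_obj {V : Hilbert} (w : R -> R) (fstar fprev h : V) (vprev a b : R) : R :=
  hnorm (hsub fstar (hadd (hscal (1 - a) fprev) (hscal b h))) ^ 2
  + w ((1 - a) * vprev + b).

(* The greedy scheme: sequences fs, vs, hs, al, be (index m >= 1 meaningful). *)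
Definition greedy_scheme {V : Hilbert} (Hd : V -> Prop) (w : R -> R) (c : R) (fstar : V)
  (fs : nat -> V) (vs : nat -> R) (hs : nat -> V) (al be : nat -> R) : Prop :=
  fs 0%nat = hzero /\ vs 0%nat = 0 /\
  forall m : nat, (1 <= m)%nat ->
    Hd (hs m) /\
    (forall h, Hd h -> (1 / c) * hinner h (hsub fstar (fs (m - 1)%nat))
                         <= hinner (hs m) (hsub fstar (fs (m - 1)%nat))) /\
    0 <= al m <= 1 /\ 0 <= be m /\
    (forall a b, 0 <= a <= 1 -> 0 <= b ->
       greedy_obj w fstar (fs (m - 1)%nat) (hs m) (vs (m - 1)%nat) (al m) (be m)
       <= greedy_obj w fstar (fs (m - 1)%nat) (hs m) (vs (m - 1)%nat) a b) /\
    fs m = hadd (hscal (1 - al m) (fs (m - 1)%nat)) (hscal (be m) (hs m)) /\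
    vs m = (1 - al m) * vs (m - 1)%nat + be m.

(* Main.v *)
Require Import Defs.
From Stdlib Require Import Reals Lra Lia List.
Open Scope R_scope.

Lemma inner_zero_l (V : Hilbert) (y : V) : hinner hzero y = 0.
Proof.
  pose proof (hinner_add_l V hzero hzero y) as H. rewrite hadd_zero in H. lra.
Qed.
Lemma inner_opp_l (V : Hilbert) (x y : V) : hinner (hopp x) y = - hinner x y.
Proof.
  pose proof (hinner_add_l V x (hopp x) y) as H. rewrite hadd_opp, inner_zero_l in H. lra.
Qed.
Lemma inner_add_r (V : Hilbert) (x y z : V) : hinner x (hadd y z) = hinner x y + hinner x z.
Proof. rewrite !(hinner_sym V x), hinner_add_l. reflexivity. Qed.
Lemma inner_opp_r (V : Hilbert) (x y : V) : hinner x (hopp y) = - hinner x y.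
Proof. rewrite !(hinner_sym V x), inner_opp_l. reflexivity. Qed.
Lemma inner_scal_r (V : Hilbert) a (x y : V) : hinner x (hscal a y) = a * hinner x y.
Proof. rewrite !(hinner_sym V x), hinner_scal_l. reflexivity. Qed.
Lemma inner_zero_r (V : Hilbert) (x : V) : hinner x hzero = 0.
Proof. rewrite hinner_sym. apply inner_zero_l. Qed.

Ltac hexp := unfold hsub in *; repeat (rewrite ?hinner_add_l, ?inner_add_r, ?inner_opp_l, ?inner_opp_r, ?hinner_scal_l, ?inner_scal_r, ?inner_zero_l, ?inner_zero_r).
Ltac hexpH H := unfold hsub in H; repeat (rewrite ?hinner_add_l, ?inner_add_r, ?inner_opp_l, ?inner_opp_r, ?hinner_scal_l, ?inner_scal_r, ?inner_zero_l, ?inner_zero_r in H).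

Lemma norm_sq (V : Hilbert) (x : V) : hnorm x ^ 2 = hinner x x.
Proof. unfold hnorm. apply pow2_sqrt, hinner_pos. Qed.
Lemma norm_pos (V : Hilbert) (x : V) : 0 <= hnorm x.
Proof. apply sqrt_pos. Qed.

Lemma cs_sq (V : Hilbert) (x y : V) : hinner x y ^ 2 <= hinner x x * hinner y y.
Proof.
  pose proof (hinner_pos V (hsub (hscal (hinner y y) x) (hscal (hinner x y) y))) as H1.
  pose proof (hinner_pos V (hsub (hscal (hinner x x) y) (hscal (hinner x y) x))) as H2.
  pose proof (hinner_pos V (hsub x y)) as H3.
  pose proof (hinner_pos V (hadd x y)) as H4.
  pose proof (hinner_pos V x) as H5. pose proof (hinner_pos V y) as H6.
  hexpH H1; hexpH H2; hexpH H3; hexpH H4. rewrite (hinner_sym V y x) in *.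
  set (a := hinner x x) in *. set (b := hinner y y) in *. set (p := hinner x y) in *.
  destruct (Rle_lt_or_eq_dec 0 b H6) as [Hb|Hb].
  - assert (0 <= b * (b*a - p^2)) by nra.
    assert (0 <= b*a - p^2).
    { destruct (Rle_or_lt 0 (b*a - p^2)); auto. nra. }
    nra.
  - rewrite <- Hb in *.
    destruct (Rle_lt_or_eq_dec 0 a H5) as [Ha|Ha].
    + assert (0 <= a * (- p^2)) by nra. nra.
    + rewrite <- Ha in *. assert (Hp : p = 0) by lra. rewrite Hp. lra.
Qed.

Lemma cs (V : Hilbert) (x y : V) : Rabs (hinner x y) <= hnorm x * hnorm y.
Proof.
  pose proof (cs_sq V x y). rewrite <- !norm_sq in H.
  pose proof (norm_pos V x). pose proof (norm_pos V y).
  rewrite <- (Rabs_pos_eq (hnorm x * hnorm y)) by nra. apply Rsqr_le_abs_0.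
  unfold Rsqr. simpl in H. nra.
Qed.

Lemma cs2 (V : Hilbert) (x y : V) : - (hnorm x * hnorm y) <= hinner x y <= hnorm x * hnorm y.
Proof.
  pose proof (cs V x y). pose proof (Rle_abs (hinner x y)).
  pose proof (Rle_abs (- hinner x y)). rewrite Rabs_Ropp in H1. lra.
Qed.

Lemma norm_le (V : Hilbert) (x : V) r : 0 <= r -> hinner x x <= r^2 -> hnorm x <= r.
Proof. intros. rewrite <- norm_sq in H0. pose proof (norm_pos V x). nra. Qed.

Lemma norm_comb (V : Hilbert) (Hd : V -> Prop) l :
  (forall h, Hd h -> hnorm h <= 1) ->
  Forall (fun p => 0 <= fst p /\ Hd (snd p)) l -> hnorm (comb l) <= coef_sum l.
Proof.
  intros Hn. induction l as [|[b h] l IH]; intros HF; simpl.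
  - apply norm_le; [lra|]. rewrite inner_zero_l. lra.
  - inversion HF as [|? ? [Hb Hh] HF']; subst. simpl in *.
    specialize (IH HF'). specialize (Hn h Hh).
    pose proof (cs2 V h (comb l)) as Hc.
    pose proof (norm_pos V h). pose proof (norm_pos V (comb l)).
    apply norm_le. { pose proof (norm_pos V (comb l)). lra. }
    hexp. rewrite <- !norm_sq. rewrite (hinner_sym V (comb l) h).
    assert (hnorm h * hnorm (comb l) <= 1 * coef_sum l) by (apply Rmult_le_compat; lra).
    assert (hnorm h ^2 <= 1) by nra.
    assert (hnorm (comb l) ^2 <= coef_sum l ^2) by nra.
    nra.
Qed.

Ltac symn V a b := try rewrite (hinner_sym V b a) in *.

Lemma step1 (V : Hilbert) (Fs P H f : V) (a c v nF : R) :
 0<=a<=1 -> 0 <= c*v ->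
 hinner f (hsub Fs P) <= c*v*hinner H (hsub Fs P) ->
 hinner H H <= 1 -> - hinner Fs H <= nF -> 0 <= nF -> hinner Fs f <= nF * v ->
 hnorm (hsub Fs (hadd (hscal (1-a) P) (hscal (a*(c*v)) H)))^2
   <= (1-a)*hnorm(hsub Fs P)^2 + a*hnorm(hsub Fs f)^2
      + a^2*(c^2*v^2 + 2*v*nF*(c+1) - hnorm f ^2).
Proof.
  intros Ha Hcv Hi HH HFH HnF HFf.
  pose proof (hinner_pos V (hsub P f)) as Hr.
  rewrite !norm_sq. hexp. hexpH Hi. hexpH Hr.
  symn V Fs P; symn V Fs H; symn V Fs f; symn V P H; symn V P f; symn V H f.
  assert (h1 : 0 <= a*(1-a)*(c*v*(hinner Fs H - hinner P H) - (hinner Fs f - hinner P f))).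
  { apply Rmult_le_pos; [apply Rmult_le_pos|]; lra. }
  assert (h2 : 0 <= a*(1-a)*(hinner P P - 2*hinner P f + hinner f f)).
  { apply Rmult_le_pos; [apply Rmult_le_pos|]; lra. }
  assert (h3 : 0 <= a^2*(c^2*v^2*(1 - hinner H H))).
  { apply Rmult_le_pos; [nra|]. apply Rmult_le_pos; nra. }
  assert (h4 : 0 <= a^2*(c*v*(nF + hinner Fs H))).
  { apply Rmult_le_pos; [nra|]. apply Rmult_le_pos; nra. }
  assert (h5 : 0 <= a^2*(v*nF - hinner Fs f)).
  { apply Rmult_le_pos; nra. }
  lra.
Qed.

Lemma step2 (V : Hilbert) (Fs P H f : V) (a c v d : R) :
 0<=a<=1 -> 0 <= c*v -> 0 <= v -> 0 < d ->
 hinner f (hsub Fs P) <= c*v*hinner H (hsub Fs P) ->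
 hinner H H <= 1 -> - hinner H f <= v -> hinner f f <= v^2 ->
 hnorm (hsub Fs (hadd (hscal (1-a) P) (hscal (a*(c*v)) H)))^2
   <= (1-a)*hnorm(hsub Fs P)^2 + a*hnorm(hsub Fs f)^2
      + a^2*(d*hnorm(hsub Fs f)^2 + (1 + /d)*((c+1)*v)^2).
Proof.
  intros Ha Hcv Hv Hd Hi HH HHf Hff.
  pose proof (hinner_pos V (hsub P f)) as Hr.
  pose proof (hinner_pos V (hsub (hscal d (hsub Fs f)) (hsub f (hscal (c*v) H)))) as Hz.
  rewrite !norm_sq. hexp. hexpH Hi. hexpH Hr. hexpH Hz.
  symn V Fs P; symn V Fs H; symn V Fs f; symn V P H; symn V P f; symn V H f.
  set (FF := hinner Fs Fs) in *. set (FP := hinner Fs P) in *. set (FH := hinner Fs H) in *.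
  set (Ff := hinner Fs f) in *. set (PP := hinner P P) in *. set (PH := hinner P H) in *.
  set (Pf := hinner P f) in *. set (HH' := hinner H H) in *. set (Hf := hinner H f) in *.
  set (ff := hinner f f) in *.
  set (G := FF - 2*Ff + ff). set (gu := Ff - c*v*FH - ff + c*v*Hf).
  set (M := ff - 2*c*v*Hf + c^2*v^2*HH').
  assert (Hz1 : 0 <= d*(d*G - 2*gu) + M) by (unfold G, gu, M; lra).
  assert (Hz2 : 0 <= d*G - 2*gu + M*/d).
  { replace (d*G - 2*gu + M*/d) with ((d*(d*G - 2*gu) + M)*/d) by (field; lra).
    apply Rmult_le_pos; [lra|]. left; apply Rinv_0_lt_compat; lra. }
  assert (HM : M <= ((c+1)*v)^2).
  { unfold M. assert (0 <= c*v*(v + Hf)) by (apply Rmult_le_pos; lra).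
    assert (0 <= c^2*v^2*(1-HH')) by (apply Rmult_le_pos; nra). nra. }
  assert (h1 : 0 <= a*(1-a)*(c*v*(FH - PH) - (Ff - Pf))).
  { apply Rmult_le_pos; [apply Rmult_le_pos|]; lra. }
  assert (h2 : 0 <= a*(1-a)*(PP - 2*Pf + ff)).
  { apply Rmult_le_pos; [apply Rmult_le_pos|]; lra. }
  assert (h3 : 0 <= a^2*(d*G - 2*gu + M*/d)).
  { apply Rmult_le_pos; nra. }
  assert (h4 : 0 <= a^2*((1 + /d)*(((c+1)*v)^2 - M))).
  { apply Rmult_le_pos; [nra|]. apply Rmult_le_pos; [|lra].
    left. pose proof (Rinv_0_lt_compat d Hd). lra. }
  unfold G, gu, M in *. lra.
Qed.

Lemma recur (e : nat -> R) (T B : R) : 0 <= B ->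
  (forall m, (1 <= m)%nat -> forall a, 0 <= a <= 1 ->
      e m <= (1-a)*e (m-1)%nat + a*T + a^2*B) ->
  forall m, (1 <= m)%nat -> e m <= T + 4*B/INR m.
Proof.
  intros HB Hs m Hm. induction m as [|m IH]; [lia|].
  destruct (Nat.eq_dec m 0) as [->|Hm0].
  - specialize (Hs 1%nat (le_n 1) 1 ltac:(lra)). simpl INR.
    replace (4*B/1) with (4*B) by field. lra.
  - assert (IH' : e m <= T + 4*B/INR m) by (apply IH; lia).
    assert (Hpos : 0 < INR m) by (apply lt_0_INR; lia).
    rewrite S_INR. set (x := INR m) in *.
    set (a := 2/(x+2)).
    assert (Ha : 0 <= a <= 1).
    { unfold a. split.
      - apply Rmult_le_pos; [lra|]. left; apply Rinv_0_lt_compat; lra.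
      - apply Rmult_le_reg_r with (x+2); [lra|]. unfold Rdiv. rewrite Rmult_assoc, Rinv_l by lra. lra. }
    specialize (Hs (S m) ltac:(lia) a Ha). replace (S m - 1)%nat with m in Hs by lia.
    assert (H1 : (1-a)*e m <= (1-a)*(T + 4*B/x)) by (apply Rmult_le_compat_l; lra).
    assert (H2 : (1-a)*(4*B/x) = 4*B/(x+2)) by (unfold a; field; lra).
    assert (H3 : a^2 = 4/(x+2)^2) by (unfold a; field; lra).
    assert (H4 : 4*B/(x+1) - 4*B/(x+2) - 4/(x+2)^2*B = 4*B/((x+1)*(x+2)^2)) by (field; lra).
    assert (H5 : 0 <= 4*B/((x+1)*(x+2)^2)).
    { apply Rmult_le_pos; [lra|]. left; apply Rinv_0_lt_compat. apply Rmult_lt_0_compat; nra. }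
    rewrite H3 in Hs. nra.
Qed.

Lemma coef_nonneg (V : Hilbert) (Hd : V -> Prop) l :
  Forall (fun p => 0 <= fst p /\ Hd (snd p)) l -> 0 <= coef_sum l.
Proof.
  induction l as [|[b h] l IH]; intros HF; simpl; [lra|].
  inversion HF as [|? ? [Hb _] HF']; subst. simpl in *. specialize (IH HF'). lra.
Qed.

Lemma inner_comb (V : Hilbert) (Hd : V -> Prop) (r : V) K l :
  (forall h, Hd h -> hinner h r <= K) ->
  Forall (fun p => 0 <= fst p /\ Hd (snd p)) l -> hinner (comb l) r <= coef_sum l * K.
Proof.
  intros HK. induction l as [|[b h] l IH]; intros HF; simpl.
  - rewrite inner_zero_l. lra.
  - inversion HF as [|? ? [Hb Hh] HF']; subst. simpl in *. specialize (IH HF').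
    rewrite hinner_add_l, hinner_scal_l. specialize (HK h Hh).
    assert (b * hinner h r <= b * K) by (apply Rmult_le_compat_l; lra). lra.
Qed.

Lemma vf_facts (V : Hilbert) (Hd : V -> Prop) (f : V) vf :
  dictionary Hd -> inF Hd f -> is_vnorm Hd f vf ->
  0 <= vf /\ hnorm f <= vf /\
  (forall r K, 0 <= K -> (forall h, Hd h -> hinner h r <= K) -> hinner f r <= vf * K).
Proof.
  intros [Hn _] [l0 [HF0 Hf0]] [Hlow Hgr]. split; [|split].
  - apply Hgr. intros x [l [[HF _] ->]]. eapply coef_nonneg; eauto.
  - apply Hgr. intros x [l [[HF Hfl] ->]]. rewrite Hfl. eapply norm_comb; eauto.
  - intros r K HK Hh. destruct (Rle_lt_or_eq_dec 0 K HK) as [Kp|K0].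
    + assert (hinner f r / K <= vf).
      { apply Hgr. intros x [l [[HF Hfl] ->]]. rewrite Hfl.
        pose proof (inner_comb V Hd r K l Hh HF).
        apply Rmult_le_reg_r with K; [lra|]. unfold Rdiv. rewrite Rmult_assoc, Rinv_l by lra. lra. }
      apply Rmult_le_reg_r with (/K). { apply Rinv_0_lt_compat; lra. }
      rewrite Rmult_assoc, Rinv_r by lra. unfold Rdiv in H. lra.
    + subst K. rewrite Hf0. pose proof (inner_comb V Hd r 0 l0 Hh HF0). lra.
Qed.

Lemma lim3 z D s : 0 <= D -> 0 <= s -> (forall d, 0 < d -> z <= d*D^2 + s^2/d) -> z <= 2*D*s.
Proof.
  intros HD Hs Hz.
  destruct (Rle_lt_or_eq_dec 0 D HD) as [Dp|D0]; destruct (Rle_lt_or_eq_dec 0 s Hs) as [sp|s0].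
  - specialize (Hz (s/D) ltac:(apply Rdiv_lt_0_compat; lra)).
    replace (s/D*D^2 + s^2/(s/D)) with (2*D*s) in Hz by (field; lra). lra.
  - subst s. destruct (Rle_or_lt z 0); [nra|].
    specialize (Hz (z/(2*D^2)) ltac:(apply Rdiv_lt_0_compat; nra)).
    replace (z/(2*D^2)*D^2 + 0^2/(z/(2*D^2))) with (z/2) in Hz by (field; lra). lra.
  - subst D. destruct (Rle_or_lt z 0); [nra|].
    specialize (Hz (2*s^2/z) ltac:(apply Rdiv_lt_0_compat; nra)).
    replace (2*s^2/z*0^2 + s^2/(2*s^2/z)) with (z/2) in Hz by (field; nra). lra.
  - subst. specialize (Hz 1 ltac:(lra)). lra.
Qed.

Theorem theorem1 (V : Hilbert) (Hd : V -> Prop) (w : R -> R) (c : R) (fstar : V)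
  (fs : nat -> V) (vs : nat -> R) (hs : nat -> V) (al be : nat -> R) :
  dictionary Hd ->
  convex_fun w -> (forall x, 0 <= w x) ->
  1 <= c ->
  greedy_scheme Hd w c fstar fs vs hs al be ->
  forall m : nat, (1 <= m)%nat ->
  forall (f : V) (vf : R), inF Hd f -> is_vnorm Hd f vf ->
    (hnorm (hsub fstar (fs m)) ^ 2 + w (vs m)
       <= hnorm (hsub fstar f) ^ 2 + w (c * vf)
          + 4 * (c ^ 2 * vf ^ 2 + 2 * vf * hnorm fstar * (c + 1) - hnorm f ^ 2) / INR m)
    /\
    (forall delta, 0 < delta ->
       hnorm (hsub fstar (fs m)) ^ 2 + w (vs m)
       <= (1 + delta) * hnorm (hsub fstar f) ^ 2 + w (c * vf)
          + 4 * (1 + delta) / delta * (c + 1) ^ 2 * vf ^ 2 / INR m)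
    /\
    (hnorm (hsub fstar (fs m)) ^ 2 + w (vs m)
       <= (hnorm (hsub fstar f) + 2 * (c + 1) * vf / sqrt (INR m)) ^ 2 + w (c * vf)).
Proof.
  intros Hdict Hconv Hw0 Hc Hg m Hm f vf HinF Hv.
  destruct (vf_facts V Hd f vf Hdict HinF Hv) as [Hvf [Hnf Hinn]].
  destruct Hdict as [Hn [Hopp H0]].
  destruct Hg as [Hf0 [Hv0 Hst]].
  pose proof (norm_pos V fstar) as HnF. pose proof (norm_pos V f) as Hnf0.
  set (e := fun k => hnorm (hsub fstar (fs k))^2 + w (vs k)).
  assert (Hcv : 0 <= c*vf) by nra.
  assert (Hbase : forall k, (1 <= k)%nat -> forall a, 0 <= a <= 1 ->
     e k <= hnorm (hsub fstar (hadd (hscal (1-a) (fs (k-1)%nat)) (hscal (a*(c*vf)) (hs k))))^2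
            + (1-a)*w (vs (k-1)%nat) + a*w (c*vf)).
  { intros k Hk a Ha.
    destruct (Hst k Hk) as [Hhk [Hsel [Hal [Hbe [Hmin [Hfk Hvk]]]]]].
    specialize (Hmin a (a*(c*vf)) Ha ltac:(nra)). unfold greedy_obj in Hmin.
    unfold e. rewrite Hfk, Hvk.
    pose proof (Hconv (vs (k-1)%nat) (c*vf) (1-a) ltac:(lra)) as Hcx.
    replace (1 - (1-a)) with a in Hcx by ring.
    replace ((1 - a) * vs (k - 1)%nat + a * (c * vf)) with ((1 - a) * vs (k - 1)%nat + a * (c * vf)) in Hmin by ring.
    lra. }
  assert (Hfacts : forall k, (1 <= k)%nat ->
     hinner f (hsub fstar (fs (k-1)%nat)) <= c*vf*hinner (hs k) (hsub fstar (fs (k-1)%nat)) /\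
     hinner (hs k) (hs k) <= 1 /\ - hinner fstar (hs k) <= hnorm fstar /\
     hinner fstar f <= hnorm fstar * vf /\ - hinner (hs k) f <= vf /\ hinner f f <= vf^2).
  { intros k Hk.
    destruct (Hst k Hk) as [Hhk [Hsel _]].
    set (r := hsub fstar (fs (k-1)%nat)) in *.
    pose proof (Hn _ Hhk) as HnH. pose proof (norm_pos V (hs k)) as HnH0.
    assert (HK0 : 0 <= hinner (hs k) r).
    { pose proof (Hsel hzero H0). rewrite inner_zero_l in H. lra. }
    assert (HK : forall h, Hd h -> hinner h r <= c * hinner (hs k) r).
    { intros h Hh. pose proof (Hsel h Hh).
      apply Rmult_le_reg_l with (1/c). { apply Rdiv_lt_0_compat; lra. }
      replace (1/c*(c*hinner (hs k) r)) with (hinner (hs k) r) by (field; lra). lra. }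
    pose proof (Hinn r (c * hinner (hs k) r) ltac:(nra) HK) as Hi.
    pose proof (cs2 V fstar (hs k)). pose proof (cs2 V fstar f). pose proof (cs2 V (hs k) f).
    rewrite <- (norm_sq V (hs k)), <- (norm_sq V f).
    split; [lra|]. split; [nra|]. split; [nra|]. split; [nra|]. split; nra. }
  assert (P2 : forall delta, 0 < delta ->
     e m <= (1 + delta) * hnorm (hsub fstar f) ^ 2 + w (c * vf)
          + 4 * (1 + delta) / delta * (c + 1) ^ 2 * vf ^ 2 / INR m).
  { intros d Hd0.
    assert (Hrec := recur e (hnorm (hsub fstar f) ^ 2 + w (c * vf) + d*hnorm (hsub fstar f) ^ 2)
                      ((1 + /d)*((c+1)*vf)^2)).
    assert (Hm0 : 0 < INR m) by (apply lt_0_INR; lia).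
    assert (HB : 0 <= (1 + /d)*((c+1)*vf)^2).
    { apply Rmult_le_pos; [|nra]. pose proof (Rinv_0_lt_compat d Hd0). lra. }
    pose proof (Hrec HB) as Hr. clear Hrec.
    assert (Hr' : e m <= hnorm (hsub fstar f) ^ 2 + w (c * vf) + d*hnorm (hsub fstar f) ^ 2
                  + 4*((1 + /d)*((c+1)*vf)^2)/INR m).
    { apply Hr; [|exact Hm]. intros k Hk a Ha.
      pose proof (Hbase k Hk a Ha).
      destruct (Hfacts k Hk) as [F1 [F2 [F3 [F4 [F5 F6]]]]].
      pose proof (step2 V fstar (fs (k-1)%nat) (hs k) f a c vf d Ha Hcv Hvf Hd0 F1 F2 F5 F6).
      assert (a^2*(d*hnorm (hsub fstar f) ^ 2) <= a*(d*hnorm (hsub fstar f) ^ 2)).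
      { apply Rmult_le_compat_r; [|nra]. apply Rmult_le_pos; [lra|]. pose proof (norm_pos V (hsub fstar f)); nra. }
      unfold e in *. lra. }
    replace (4 * (1 + d) / d * (c + 1) ^ 2 * vf ^ 2 / INR m)
      with (4*((1 + /d)*((c+1)*vf)^2)/INR m) by (field; lra). lra. }
  split; [|split].
  - assert (Hm0 : 0 < INR m) by (apply lt_0_INR; lia).
    assert (0 <= vf * hnorm fstar * (c+1)) by (apply Rmult_le_pos; [apply Rmult_le_pos|]; lra).
    assert (hnorm f ^2 <= vf^2) by (apply pow_incr; lra). assert (0 <= (c^2-1)*vf^2) by (apply Rmult_le_pos; [clear - Hc; nra | apply pow2_ge_0]).
    apply (recur e); [lra| |exact Hm]. intros k Hk a Ha.
    pose proof (Hbase k Hk a Ha).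
    destruct (Hfacts k Hk) as [F1 [F2 [F3 [F4 [F5 F6]]]]].
    pose proof (step1 V fstar (fs (k-1)%nat) (hs k) f a c vf (hnorm fstar) Ha Hcv F1 F2 F3 HnF F4).
    unfold e in *. lra.
  - exact P2.
  - assert (Hm0 : 0 < INR m) by (apply lt_0_INR; lia).
    pose proof (sqrt_lt_R0 _ Hm0) as Hsq. pose proof (sqrt_sqrt _ (Rlt_le _ _ Hm0)) as Hsq2.
    set (s := 2 * (c + 1) * vf / sqrt (INR m)).
    assert (Hs0 : 0 <= s) by (unfold s; apply Rmult_le_pos; [nra|left; apply Rinv_0_lt_compat; lra]).
    assert (Hs2 : s^2 = 4*(c+1)^2*vf^2/INR m) .
    { unfold s. rewrite <- (pow2_sqrt (INR m)) at 2 by lra. field. lra. }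
    pose proof (norm_pos V (hsub fstar f)) as HD.
    assert (L := lim3 (e m - hnorm (hsub fstar f)^2 - w (c*vf) - s^2) (hnorm (hsub fstar f)) s HD Hs0).
    assert (e m - hnorm (hsub fstar f)^2 - w (c*vf) - s^2 <= 2*hnorm (hsub fstar f)*s).
    { apply L. intros d Hd0. pose proof (P2 d Hd0) as P.
      replace (4 * (1 + d) / d * (c + 1) ^ 2 * vf ^ 2 / INR m) with (s^2 + s^2/d) in P
        by (rewrite Hs2; field; lra). lra. }
    unfold e in H. lra.
Qed.
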